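(* Let $G$ be a permutation group on a finite set $\Omega$ of size $t$. If $G$ contains a regular normal subgroup, then $\mathrm{I}(G)\le \log t+1$.
   Context: Logarithms are to base $2$. An irredundant base for $G$ on $\Omega$ is an ordered sequence $[\omega_1,\dots,\omega_k]$ with $G>G_{\omega_1}>G_{\omega_1,\omega_2}>\dots>G_{\omega_1,\dots,\omega_k}=1$, all inclusions strict; $\mathrm{I}(G)$ is the maximum length of an irredundant base. *)

(* Defs.v *)
From mathcomp Require Import all_boot all_fingroup.
From Stdlib Require Import Reals.
Set Implicit Arguments. Unset Strict Implicit. Unset Printing Implicit Defensive.

Local Open Scope group_scope.

Section Defs.
Variable T : finType.

Definition regular (N : {set {perm T}}) : Prop :=
  [transitive N, on [set: T] | 'P] /\ forall x : T, 'C_N[x | 'P] = 1.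

Definition pstab (G : {set {perm T}}) (s : seq T) : {set {perm T}} :=
  'C_G([set x in s] | 'P).

Definition irredundant_base (G : {set {perm T}}) (s : seq T) : Prop :=
  (forall i, (i < size s)%N -> pstab G (take i.+1 s) \proper pstab G (take i s))
  /\ pstab G s = 1.
End Defs.

Definition log2R (x : R) : R := (ln x / ln 2)%R.

(* Main.v *)
Require Import Defs.
From mathcomp Require Import all_boot all_fingroup.
From mathcomp Require Import zify.
From Stdlib Require Import Reals Lra Lia.
Set Implicit Arguments. Unset Strict Implicit. Unset Printing Implicit Defensive.
Local Open Scope group_scope.

Section S.
Variable T : finType.

Lemma key (N G : {group {perm T}}) (w : T) (h n : {perm T}) :
  N <| G -> 'C_N[w | 'P] = 1 -> h \in G -> h w = w -> n \in N ->
  (h (n w) = n w <-> commute n h).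
Proof.
move=> /andP[_ nNG] reg hG hw nN; split=> [hfix|cnh].
- have mN : n ^ h \in N by rewrite memJ_norm // (subsetP nNG).
  have mw : (n ^ h) w = n w by rewrite -{1}hw permJ.
  have : n ^ h * n^-1 \in 'C_N[w | 'P].
    rewrite inE groupM ?groupV //=; apply/astab1P; rewrite /= /aperm permM mw.
    by rewrite -permM mulgV perm1.
  rewrite reg => /set1P /eqP; rewrite mulg_eq1 => /eqP; rewrite invgK => e.
  by rewrite /commute conjgC e.
- by rewrite -permM cnh permM hw.
Qed.

Lemma pstabP (G : {set {perm T}}) s h :
  reflect (h \in G /\ forall x, x \in s -> h x = x) (h \in pstab G s).
Proof.
rewrite /pstab inE; apply: (iffP andP) => [[hG /astabP H]|[hG H]].
  by split=> // x xs; apply: H; rewrite inE.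
by split=> //; apply/astabP => x; rewrite inE => /H.
Qed.

Lemma dbl (d m : nat) : d %| m -> 0 < d -> d < m -> d * 2 <= m.
Proof.
move=> /dvdnP[q ->] d0 lt; have : 1 < q.
  by case: q lt => [|[|q]] //; rewrite ?mul0n ?mul1n ?ltnn.
nia.
Qed.

Lemma main_nat (G N : {group {perm T}}) (s : seq T) :
  N <| G -> regular N -> irredundant_base G s -> 0 < size s ->
  expn 2 (size s).-1 <= #|T|.
Proof.
move=> nNG [tr reg] [irr base]; case: s irr base => // w s' irr base _.
set s := w :: s' in irr base *.
pose D i := ('C_N(pstab G (take i s)))%G.
have regw := reg w.
have prop : forall j, j.+1 < size s -> D j.+1 \proper D j.+2.
  move=> j lt; set x := nth w s j.+1.
  have etk : take j.+2 s = rcons (take j.+1 s) x by rewrite (take_nth w).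
  have [sub nsub] := andP (irr _ lt).
  move: etk sub nsub; set t1 := take j.+1 s; set t2 := take j.+2 s => etk sub nsub.
  rewrite /D -/t1 -/t2.
  have : x \in orbit 'P N w by rewrite (atransP tr) ?inE.
  case/orbitP => n nN /=; rewrite /aperm => nw.
  have wt : forall k, w \in take k.+1 s by move=> k; rewrite /= inE eqxx.
  apply/properP; split.
    by rewrite setIS // centS.
  exists n.
    rewrite inE nN; apply/centP => h /pstabP [hG hfix].
    apply/(key nNG regw hG (hfix _ (wt _)) nN); rewrite nw; apply: hfix.
    by rewrite etk mem_rcons inE eqxx.
  rewrite inE nN /=; apply/negP => /centP cn; move/negP: nsub; apply.
  apply/subsetP => h hH; have [hG hfix] := pstabP _ _ _ hH.
  apply/pstabP; split=> // y; rewrite etk mem_rcons inE => /orP[/eqP ->|]; last exact: hfix.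
  rewrite -nw; apply/(key nNG regw hG (hfix _ (wt _)) nN); exact: cn.
have ind : forall j, j < size s -> expn 2 j <= #|D j.+1|.
  elim=> [|j IH] lt; first by rewrite expn0 cardG_gt0.
  have p := prop j lt; rewrite expnS mulnC.
  apply: leq_trans (dbl (cardSg (proper_sub p)) (cardG_gt0 _) (proper_card p)).
  by rewrite leq_mul2r IH // ltnW.
have := ind (size s).-1 (ltnSn _); rewrite prednK //.
have -> : D (size s) = N.
  apply/val_inj; rewrite /= take_size; rewrite /s in base; by rewrite base cent1T setIT.
suff -> : #|T| = #|N| by [].
by rewrite -cardsT -(atransP tr w (in_setT w)) card_orbit regw indexg1.
Qed.
End S.

Lemma ln_le' x y : (0 < x)%R -> (x <= y)%R -> (ln x <= ln y)%R.
Proof. intros hx hxy; destruct (Rle_lt_or_eq_dec _ _ hxy) as [h|h].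
- left; now apply ln_increasing. - subst; lra. Qed.

Lemma real_part (k t : nat) : 0 < t -> expn 2 k.-1 <= t ->
  (INR k <= log2R (INR t) + 1)%R.
Proof.
unfold log2R; intros ht hk.
assert (l2 : (0 < ln 2)%R) by (rewrite <- ln_1; apply ln_increasing; lra).
assert (t1 : (1 <= INR t)%R) by (apply (le_INR 1); apply/leP; exact ht).
assert (lt0 : (0 <= ln (INR t))%R) by (rewrite <- ln_1; apply ln_le'; lra).
destruct k as [|m].
- simpl. assert (0 <= ln (INR t) / ln 2)%R by (unfold Rdiv; apply Rmult_le_pos; [lra| left; apply Rinv_0_lt_compat; lra]). lra.
- rewrite S_INR. simpl in hk. move/leP: hk => hk.
  apply le_INR in hk.
  have e : forall n, INR (expn 2 n) = (2 ^ n)%R.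
  { elim=> [|n IH]; first by rewrite expn0. by rewrite expnS mulnE mult_INR IH. }
  rewrite e in hk.
  apply ln_le' in hk; [|apply pow_lt; lra]. rewrite ln_pow in hk; last lra.
  assert (INR m <= ln (INR t) / ln 2)%R.
  { apply (Rmult_le_reg_r (ln 2)); auto. unfold Rdiv. rewrite Rmult_assoc Rinv_l; last lra.
    lra. }
  lra.
Qed.

Theorem proposition3p1 (T : finType) (G : {group {perm T}}) :
  (exists N : {group {perm T}}, (N <| G)%g /\ regular N) ->
  forall s : seq T, irredundant_base G s ->
  (INR (size s) <= log2R (INR #|T|) + 1)%R.
Proof.
move=> [N [nNG rg]] s ib.
have t0 : 0 < #|T|.
  have [tr _] := rg; case/imsetP: tr => x _ _; exact/card_gt0P/(ex_intro _ x).
apply: (real_part t0).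
case: (posnP (size s)) => [->|sp]; first by rewrite expn0.
exact: main_nat nNG rg ib sp.
Qed.
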